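(* Let $m\ge 3$. Let $H_2$ be the graph with vertices $v_1,\dots,v_6$ and edges $v_1v_2,v_2v_3,v_3v_4,v_4v_5,v_5v_6,v_6v_1,v_2v_5,v_3v_6$, and let $H_4$ be the graph with vertices $v_1,\dots,v_6$ and edges $v_1v_2,v_2v_3,v_3v_4,v_4v_5,v_5v_6,v_6v_1,v_2v_6,v_3v_5$ (each has exactly two vertices of degree $2$, namely $v_1$ and $v_4$). Let $G_1$ (respectively $G_2$) be the cubic graph constructed from the cycle $C_m$ by replacing each vertex with a copy of $H_4$ (respectively $H_2$), where each edge $uv$ of $C_m$ is replaced by an edge joining a degree-$2$ vertex of the copy for $u$ to a degree-$2$ vertex of the copy for $v$, each degree-$2$ vertex being used exactly once. Then (a) $G_1$ is a bridgeless, Class $1$ cubic graph with triangles; (b) $G_2$ is a bridgeless, Class $1$, triangle-free cubic graph; and (c) for $i=1,2$, $c_2(G_i)-\left\lceil\frac{|V(G_i)|+2}{4}\right\rceil=\left\lfloor\frac{m-1}{2}\right\rfloor$.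
   Context: A graph is bridgeless if it has no bridge. A graph of maximum degree $\Delta$ is Class $1$ if its chromatic index is $\Delta$ and Class $2$ if it is $\Delta+1$. For a graph $G=(V,E)$ and $S_0\subseteq V$, the irreversible $2$-threshold conversion process sets, for $t=1,2,\dots$, $S_t=S_{t-1}\cup\{v: v \text{ has at least } 2 \text{ neighbours in } S_{t-1}\}$; $S_0$ is a $2$-conversion set if $S_t=V$ for some $t$, and $c_2(G)$ is the minimum size of a $2$-conversion set. *)

(* Defs.v *)
From mathcomp Require Import all_boot all_order all_algebra.
Set Implicit Arguments. Unset Strict Implicit. Unset Printing Implicit Defensive.

Section GraphNotions.
Variable T : finType.
Implicit Types (e : rel T) (S : {set T}).

Definition simple_graph e := irreflexive e /\ symmetric e.

Definition nbhd e (v : T) : {set T} := [set w | e v w].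
Definition deg e (v : T) : nat := #|nbhd e v|.
Definition maxdeg e : nat := \max_(v : T) deg e v.
Definition cubic e := forall v, deg e v = 3.

Definition proper_edge_colouring e k (c : T -> T -> 'I_k) :=
  (forall x y, e x y -> c x y = c y x) /\
  (forall x y z, e x y -> e x z -> y != z -> c x y != c x z).
Definition edge_colourable e k := exists c, @proper_edge_colouring e k c.
Definition is_chromatic_index e k :=
  edge_colourable e k /\ forall j, edge_colourable e j -> k <= j.
Definition class1 e := is_chromatic_index e (maxdeg e).

Definition has_triangle e := exists x y z, [&& e x y, e y z & e z x].

Definition remove_edge e (u v : T) : rel T :=
  [rel x y | e x y && ~~ (((x == u) && (y == v)) || ((x == v) && (y == u)))].
Definition is_bridge e u v := e u v /\ ~~ connect (remove_edge e u v) u v.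
Definition bridgeless e := forall u v, ~ is_bridge e u v.

Definition conv_step e S : {set T} :=
  S :|: [set v | 2 <= #|[set w in S | e v w]|].
Definition conversion_set2 e S := exists t : nat, iter t (conv_step e) S = setT.
Definition is_c2 e (k : nat) :=
  (exists S, conversion_set2 e S /\ #|S| = k) /\
  (forall S, conversion_set2 e S -> k <= #|S|).
End GraphNotions.

Unset Implicit Arguments.
(* The gadgets, vertices v1..v6 numbered 0..5 *)
Definition H2_edges : seq (nat * nat) :=
  [:: (0,1); (1,2); (2,3); (3,4); (4,5); (5,0); (1,4); (2,5)]%N.
Definition H4_edges : seq (nat * nat) :=
  [:: (0,1); (1,2); (2,3); (3,4); (4,5); (5,0); (1,5); (2,4)]%N.

Definition Hadj (E : seq (nat * nat)) (a b : 'I_6) : bool :=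
  (((a : nat), (b : nat)) \in E) || (((b : nat), (a : nat)) \in E).

(* link: v4 (index 3) of copy i joined to v1 (index 0) of copy i+1 mod m *)
Definition ring_link (m : nat) (x y : 'I_m * 'I_6) : bool :=
  [&& (x.2 : nat) == 3, (y.2 : nat) == 0 & (y.1 : nat) == (x.1.+1 %% m)].

Definition ring_graph (m : nat) (E : seq (nat * nat)) : rel ('I_m * 'I_6) :=
  [rel x y | ((x.1 == y.1) && Hadj E x.2 y.2) || @ring_link m x y || @ring_link m y x].

Definition G1 (m : nat) := @ring_graph m H4_edges.
Definition G2 (m : nat) := @ring_graph m H2_edges.

(* Main.v *)
Require Import Defs.
From mathcomp Require Import all_boot all_order all_algebra.
From mathcomp Require Import zify.

Definition o6 (k : nat) : 'I_6 := Ordinal (ltn_pmod k (isT : 0 < 6)).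
Definition L6 : seq 'I_6 := map o6 (iota 0 6).

Lemma o6_val (a : 'I_6) : o6 a = a.
Proof. by apply: val_inj; rewrite /= modn_small. Qed.

Lemma L6_full (a : 'I_6) : a \in L6.
Proof. by rewrite -[a]o6_val; apply: map_f; rewrite mem_iota /=. Qed.

Lemma L6_uniq : uniq L6.
Proof. by vm_compute. Qed.

Lemma forall6 (P : pred 'I_6) : all P L6 -> forall a, P a.
Proof. by move/allP=> H a; apply: H; apply: L6_full. Qed.

Lemma card6 (P : pred 'I_6) : #|[pred b | P b]| = count P L6.
Proof.
rewrite cardE -size_filter; apply: perm_size; apply: uniq_perm.
- exact: enum_uniq.
- exact: filter_uniq L6_uniq.
by move=> x; rewrite mem_enum mem_filter L6_full andbT inE.
Qed.

Lemma t1 : all (fun a => count (Hadj H4_edges a) L6 + (((a:nat) == 0) || ((a:nat) == 3)) == 3) L6.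
Proof. by vm_compute. Qed.

Lemma ord_pos {m} (i : 'I_m) : 0 < m.
Proof. exact: leq_ltn_trans (leq0n i) (ltn_ord i). Qed.

Definition osucc {m} (i : 'I_m) : 'I_m := Ordinal (ltn_pmod i.+1 (ord_pos i)).
Definition opred {m} (i : 'I_m) : 'I_m := Ordinal (ltn_pmod (i + m.-1) (ord_pos i)).

Lemma osucc_pred m (i : 'I_m) : osucc (opred i) = i.
Proof.
apply: val_inj => /=; rewrite -addn1 modnDml -(addnA i) addn1 prednK ?(ord_pos i) //.
by rewrite modnDr modn_small.
Qed.

Lemma iter_osucc m (i : 'I_m) k : (iter k (@osucc m) i : nat) = (i + k) %% m.
Proof.
elim: k => [|k IH]; first by rewrite addn0 modn_small.
by rewrite iterS /= IH -addn1 modnDml addn1 addnS.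
Qed.

Lemma iter_osucc_neq m (i : 'I_m) k : 0 < k < m -> iter k (@osucc m) i != i.
Proof.
move=> /andP[k0 km]; apply/negP => /eqP H0.
have H : (i + k) %% m = i by rewrite -iter_osucc H0.
have : (i + k == i + 0 %[mod m]) by rewrite H addn0 modn_small.
by rewrite eqn_modDl mod0n modn_small // => /eqP; lia.
Qed.

Lemma iter_osucc_m m (i : 'I_m) : iter m (@osucc m) i = i.
Proof. by apply: val_inj => /=; rewrite iter_osucc modnDr modn_small. Qed.

Lemma osucc_inj m : injective (@osucc m).
Proof.
move=> x y /(congr1 val) /=.
have hx := ltn_ord x; have hy := ltn_ord y.
case: (ltngtP x.+1 m) => hx'; case: (ltngtP y.+1 m) => hy'; try lia;
  rewrite ?(modn_small hx') ?(modn_small hy') ?hx' ?hy' ?modnn;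
  move=> H; apply: val_inj => /=; lia.
Qed.

Lemma osucc_neq m (i : 'I_m) : 1 < m -> osucc i != i.
Proof. by move=> hm; have := @iter_osucc_neq m i 1; rewrite /= hm; apply. Qed.

Definition ext m (x y : 'I_m * 'I_6) := ring_link m x y || ring_link m y x.

Lemma ringE m E x y : ring_graph m E x y = ((x.1 == y.1) && Hadj E x.2 y.2) || ext m x y.
Proof. by rewrite /= /ext orbA. Qed.

Lemma linkE m (x y : 'I_m * 'I_6) :
  ring_link m x y = [&& (x.2:nat) == 3, (y.2:nat) == 0 & y.1 == osucc x.1].
Proof. by []. Qed.

Lemma ext_sym m x y : ext m x y = ext m y x.
Proof. by rewrite /ext orbC. Qed.

Lemma ext_neq m (hm : 1 < m) (x y : 'I_m * 'I_6) : ext m x y -> x.1 != y.1.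
Proof.
rewrite /ext !linkE => /orP[/and3P[_ _ /eqP ->]|/and3P[_ _ /eqP ->]].
  by rewrite eq_sym osucc_neq.
by rewrite osucc_neq.
Qed.

Lemma ext_03 m (x y : 'I_m * 'I_6) : ext m x y -> ((x.2:nat) == 0) || ((x.2:nat) == 3).
Proof. by rewrite /ext !linkE => /orP[/and3P[-> _ _]|/and3P[_ -> _]]; rewrite ?orbT. Qed.

Lemma pair_eq6 m (x z : 'I_m * 'I_6) : x.1 = z.1 -> (x.2:nat) = z.2 -> x = z.
Proof. by case: x z => [x1 x2] [z1 z2] /= -> H; congr pair; apply: val_inj. Qed.

Lemma ext_uniq m (x y z : 'I_m * 'I_6) : ext m y x -> ext m y z -> x = z.
Proof.
rewrite /ext !linkE.
case/orP=> /and3P[/eqP h1 /eqP h2 /eqP h3]; case/orP=> /and3P[/eqP g1 /eqP g2 /eqP g3];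
  try (by rewrite h1 in g1 || by rewrite h2 in g2 || by rewrite h1 in g2 || by rewrite h2 in g1).
- by apply: pair_eq6; rewrite ?h3 ?g3 ?h2 ?g2.
- by apply: pair_eq6; [apply: osucc_inj; rewrite -h3 -g3 | rewrite h1 g1].
Qed.

Lemma card6s (P : pred 'I_6) : #|[set b | P b]| = count P L6.
Proof. by rewrite -card6; apply: eq_card => b; rewrite !inE. Qed.

Lemma Hadj_sym E a b : Hadj E a b = Hadj E b a.
Proof. by rewrite /Hadj orbC. Qed.

Lemma simple_ring m E (HE : forall a, Hadj E a a = false) : simple_graph (ring_graph m E).
Proof.
split.
- move=> x; rewrite ringE HE andbF /= /ext !linkE.
  apply/negP => /orP[] /and3P[/eqP -> /eqP]; by case.
- by move=> x y; rewrite !ringE ext_sym eq_sym Hadj_sym.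
Qed.

Lemma ext_card m (hm : 1 < m) (v : 'I_m * 'I_6) :
  #|[set w | ext m v w]| = (((v.2:nat) == 0) || ((v.2:nat) == 3)).
Proof.
case: v => i a /=.
have [a3|a3] := eqVneq (a:nat) 3.
  rewrite a3 /=.
  have -> : [set w | ext m (i, a) w] = [set (osucc i, o6 0)].
    apply/setP=> [[j b]]; rewrite !inE /ext !linkE /= a3 /= xpair_eqE.
    by rewrite andbF orbF andbC.
  by rewrite cards1.
have [a0|a0] := eqVneq (a:nat) 0.
  rewrite /=.
  have -> : [set w | ext m (i, a) w] = [set (opred i, o6 3)].
    apply/setP=> [[j b]]; rewrite !inE /ext !linkE /= a0 /= xpair_eqE.
    have -> : (i == osucc j) = (j == opred i).
      by apply/eqP/eqP => [->|->]; [apply: osucc_inj; rewrite osucc_pred | rewrite osucc_pred].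
    by rewrite andbC.
  by rewrite cards1.
rewrite /=.
apply/eqP; rewrite cards_eq0; apply/eqP/setP => [[j b]].
by rewrite !inE /ext !linkE /= (negPf a0) (negPf a3) /= andbF.
Qed.

Lemma cubic_ring m E (hm : 1 < m)
  (HE : forall a, count (Hadj E a) L6 + (((a:nat) == 0) || ((a:nat) == 3)) = 3) :
  cubic (ring_graph m E).
Proof.
move=> v; rewrite /deg /nbhd.
have -> : [set w | ring_graph m E v w] =
   setX [set v.1] [set b | Hadj E v.2 b] :|: [set w | ext m v w].
  by apply/setP => w; rewrite !inE ringE eq_sym.
rewrite cardsU cardsX cards1 mul1n card6s ext_card //.
have -> : setX [set v.1] [set b | Hadj E v.2 b] :&: [set w | ext m v w] = set0.
  apply/setP => w; rewrite !inE; apply/negP => /andP[/andP[/eqP h _] /ext_neq].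
  by rewrite h eqxx => /(_ hm).
by rewrite cards0 subn0 HE.
Qed.

Definition rem6 E (a b : 'I_6) :=
  [rel x y : 'I_6 | Hadj E x y && ~~ (((x == a) && (y == b)) || ((x == b) && (y == a)))].

Fixpoint lookup (tab : seq (nat * nat * seq nat)) (a b : nat) : seq nat :=
  match tab with
  | [::] => [::]
  | (x, y, p) :: t => if (x == a) && (y == b) then p
                      else if (x == b) && (y == a) then rev (belast b p)
                      else lookup t a b
  end.

Definition altp tab (a b : 'I_6) : seq 'I_6 := map o6 (lookup tab a b).

Definition tab_ok E tab :=
  all (fun a => all (fun b => Hadj E a b ==>
        (path (rem6 E a b) a (altp tab a b) && (last a (altp tab a b) == b))) L6) L6.

Definition tab4 : seq (nat * nat * seq nat) :=
  [:: (0,1,[:: 5;1]); (1,2,[:: 5;4;2]); (2,3,[:: 4;3]); (3,4,[:: 2;4]);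
      (4,5,[:: 2;1;5]); (5,0,[:: 1;0]); (1,5,[:: 0;5]); (2,4,[:: 3;4])]%N.
Definition tab2 : seq (nat * nat * seq nat) :=
  [:: (0,1,[:: 5;4;1]); (1,2,[:: 4;3;2]); (2,3,[:: 5;4;3]); (3,4,[:: 2;1;4]);
      (4,5,[:: 1;0;5]); (5,0,[:: 2;1;0]); (1,4,[:: 0;5;4]); (2,5,[:: 3;4;5])]%N.

Lemma tab4_ok : tab_ok H4_edges tab4. Proof. by vm_compute. Qed.
Lemma tab2_ok : tab_ok H2_edges tab2. Proof. by vm_compute. Qed.

Lemma remEdgeE {T : finType} (e : rel T) u v x y :
  remove_edge e u v x y = e x y && ~~ (((x == u) && (y == v)) || ((x == v) && (y == u))).
Proof. by []. Qed.

Lemma lift_path m E (i : 'I_m) a b (p : seq 'I_6) x :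
  path (rem6 E a b) x p ->
  path (remove_edge (ring_graph m E) (i, a) (i, b)) (i, x) (map (pair i) p).
Proof.
elim: p x => [|y p IH] x //=; case/andP=> hxy hp; rewrite IH // andbT.
move: hxy; rewrite remEdgeE ringE /= !xpair_eqE !eqxx /=.
by case/andP=> -> ->.
Qed.

Lemma rem_sym {T : finType} (e : rel T) u v : symmetric e -> symmetric (remove_edge e u v).
Proof.
move=> se x y; rewrite !remEdgeE se; congr (_ && ~~ _).
by rewrite orbC; congr (_ || _); rewrite andbC.
Qed.

Lemma rem_swap {T : finType} (e : rel T) u v : remove_edge e u v =2 remove_edge e v u.
Proof. by move=> x y; rewrite !remEdgeE orbC. Qed.

Lemma link_conn m E (hm : 1 < m)
  (H01 : Hadj E (o6 0) (o6 1)) (H12 : Hadj E (o6 1) (o6 2)) (H23 : Hadj E (o6 2) (o6 3))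
  (x y : 'I_m * 'I_6) :
  ring_link m x y -> connect (remove_edge (ring_graph m E) x y) y x.
Proof.
rewrite linkE => /and3P[/eqP hx /eqP hy /eqP h1].
have -> : x = (x.1, o6 3) by apply: pair_eq6.
have -> : y = (osucc x.1, o6 0) by apply: pair_eq6.
move: x.1 => i {x y hx hy h1}.
set R := remove_edge _ _ _.
have sneq := @osucc_neq m i hm.
have Rin : forall j c d, Hadj E c d -> R (j, c) (j, d).
  move=> j c d hcd; rewrite /R remEdgeE ringE /= eqxx hcd /= !xpair_eqE.
  apply/negP => /orP[] /andP[] /andP[/eqP e1 _] /andP[/eqP e2 _];
    by move/eqP: sneq => sneq; congruence.
have c03 : forall j, connect R (j, o6 0) (j, o6 3).
  move=> j; apply: (connect_trans (connect1 (Rin j _ _ H01))).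
  apply: (connect_trans (connect1 (Rin j _ _ H12))).
  exact: (connect1 (Rin j _ _ H23)).
have Rlk : forall j, j != i -> R (j, o6 3) (osucc j, o6 0).
  move=> j hj; rewrite /R remEdgeE ringE /ext linkE /= eqxx !orbT /= !xpair_eqE.
  have f30 : (o6 3 == o6 0) = false by [].
  by rewrite (negPf hj) f30 andbF.
have claim : forall k, k < m -> connect R (osucc i, o6 0) (iter k osucc (osucc i), o6 0).
  elim=> [|k IH] hk; first exact: connect0.
  apply: (connect_trans (IH (ltnW hk))).
  apply: (connect_trans (c03 _)).
  rewrite iterS; apply: connect1; apply: Rlk.
  rewrite -iterSr; apply: iter_osucc_neq; lia.
have := claim m.-1; rewrite -iterSr prednK ?(ord_pos i) // iter_osucc_m.
move=> /(_ (leqnn m)) h.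
exact: connect_trans h (c03 i).
Qed.

Lemma bridgeless_ring m E tab (hm : 1 < m) (HE : forall a, Hadj E a a = false)
  (Ht : tab_ok E tab)
  (H01 : Hadj E (o6 0) (o6 1)) (H12 : Hadj E (o6 1) (o6 2)) (H23 : Hadj E (o6 2) (o6 3)) :
  bridgeless (ring_graph m E).
Proof.
move=> u v [huv hn]; apply: (negP hn).
have [_ se] := @simple_ring m E HE.
rewrite ringE in huv; case/orP: huv => [/andP[/eqP h1 hadj] | hext].
  case: u v h1 hadj {hn} => [i a] [j b] /= <- hadj.
  have := allP (allP Ht a (L6_full a)) b (L6_full b).
  rewrite hadj /= => /andP[hp hl].
  apply/connectP; exists (map (pair i) (altp tab a b)); first exact: lift_path.
  by rewrite last_map (eqP hl).
case/orP: hext => hl.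
  rewrite (sym_connect_sym (rem_sym (ring_graph m E) u v se)).
  exact: link_conn.
rewrite (eq_connect (rem_swap (ring_graph m E) u v)).
exact: link_conn.
Qed.

Arguments ext_neq {m} hm {x y}.
Arguments ext_03 {m x y}.
Arguments ext_uniq {m x y z}.

Definition cinN (a b : nat) : nat :=
  if (a.+1 == b) || (b.+1 == a) then (if odd (minn a b) then 2 else 1)
  else if (a * b == 0) && (a + b == 5) then 2 else 0.
Definition o3 (k : nat) : 'I_3 := Ordinal (ltn_pmod k (isT : 0 < 3)).
Definition cin (a b : 'I_6) : 'I_3 := o3 (cinN a b).
Definition col m (x y : 'I_m * 'I_6) : 'I_3 := if x.1 == y.1 then cin x.2 y.2 else o3 0.

Definition col_ok E :=
  all (fun a => all (fun b => all (fun c =>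
     Hadj E a b ==> Hadj E a c ==> (b != c) ==> (cin a b != cin a c)) L6) L6) L6 &&
  all (fun a => all (fun b =>
     Hadj E a b ==> (((a:nat) == 0) || ((a:nat) == 3)) ==> (cin a b != o3 0)) L6) L6.

Lemma col_ok4 : col_ok H4_edges. Proof. by vm_compute. Qed.
Lemma col_ok2 : col_ok H2_edges. Proof. by vm_compute. Qed.

Lemma cin_sym a b : cin a b = cin b a.
Proof. by rewrite /cin /cinN orbC minnC mulnC addnC. Qed.

Lemma col_proper m E (hm : 1 < m) (HC : col_ok E) :
  proper_edge_colouring (ring_graph m E) (@col m).
Proof.
case/andP: HC => /allP F1 /allP F2.
split.
  by move=> x y _; rewrite /col eq_sym cin_sym.
move=> x y z; rewrite !ringE => hxy hxz hyz.
case/orP: hxy => [/andP[h1 a1]|exy]; case/orP: hxz => [/andP[g1 b1]|exz].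
- rewrite /col h1 g1.
  have hyz2 : y.2 != z.2.
    apply: contra hyz => /eqP e2; apply/eqP; apply: pair_eq6; last by rewrite e2.
    by rewrite -(eqP h1) -(eqP g1).
  have := allP (allP (F1 _ (L6_full x.2)) _ (L6_full y.2)) _ (L6_full z.2).
  by rewrite a1 b1 hyz2.
- rewrite /col h1 (negPf (ext_neq hm exz)).
  have := allP (F2 _ (L6_full x.2)) _ (L6_full y.2).
  by rewrite a1 (ext_03 exz).
- rewrite /col g1 (negPf (ext_neq hm exy)) eq_sym.
  have := allP (F2 _ (L6_full x.2)) _ (L6_full z.2).
  by rewrite b1 (ext_03 exy).
- by rewrite (ext_uniq exy exz) eqxx in hyz.
Qed.

Lemma maxdeg3 m E (hm : 0 < m) : cubic (ring_graph m E) -> maxdeg (ring_graph m E) = 3.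
Proof.
move=> hc; apply/eqP; rewrite eqn_leq; apply/andP; split.
  by apply/bigmax_leqP => v _; rewrite hc.
have := @leq_bigmax _ (fun v => deg (ring_graph m E) v) (Ordinal hm, o6 0).
by rewrite hc.
Qed.

Lemma class1_ring m E (hm : 1 < m) (HC : col_ok E) :
  cubic (ring_graph m E) -> class1 (ring_graph m E).
Proof.
move=> hc; have hm0 : 0 < m by lia.
rewrite /class1 maxdeg3 //; split.
  by exists (@col m); apply: col_proper.
move=> j [c [_ hp]].
set v0 := (Ordinal hm0, o6 0).
rewrite -(hc v0) /deg.
have inj : {in nbhd (ring_graph m E) v0 &, injective (c v0)}.
  move=> w1 w2; rewrite !inE => h1 h2 heq; apply/eqP; apply/negPn/negP => hne.
  by move: (hp _ _ _ h1 h2 hne); rewrite heq eqxx.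
rewrite -(card_in_imset inj).
by apply: leq_trans (max_card _) _; rewrite card_ord.
Qed.

Lemma tri_copy m E (hm : 1 < m) (HE : forall a, Hadj E a a = false) (x y z : 'I_m * 'I_6) :
  ring_graph m E x y -> ring_graph m E y z -> ring_graph m E z x -> x.1 == y.1.
Proof.
have [irr _] := @simple_ring m E HE.
move=> hxy hyz hzx.
move: hxy; rewrite ringE => /orP[/andP[-> _] //| exy].
have eyx : ext m y x by rewrite ext_sym.
move: (hzx); rewrite ringE => /orP[/andP[/eqP zx _]| ezx].
  move: (hyz); rewrite ringE => /orP[/andP[/eqP yz _]| eyz].
    by move: (ext_neq hm exy); rewrite -zx yz eqxx.
  by move: hzx; rewrite -(ext_uniq eyx eyz) irr.
have exz : ext m x z by rewrite ext_sym.
by move: hyz; rewrite -(ext_uniq exy exz) irr.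
Qed.

Arguments tri_copy {m E} hm HE {x y z}.

Lemma tri_free m E (hm : 1 < m) (HE : forall a, Hadj E a a = false)
  (HT : all (fun a => all (fun b => all (fun c => ~~ [&& Hadj E a b, Hadj E b c & Hadj E c a]) L6) L6) L6) :
  ~ has_triangle (ring_graph m E).
Proof.
move=> [x [y [z /and3P[hxy hyz hzx]]]].
have e1 := tri_copy hm HE hxy hyz hzx.
have e2 := tri_copy hm HE hyz hzx hxy.
have e3 := tri_copy hm HE hzx hxy hyz.
have in_ : forall u v, u.1 == v.1 -> ring_graph m E u v -> Hadj E u.2 v.2.
  move=> u v huv; rewrite ringE huv /= => /orP[//|/(ext_neq hm)].
  by rewrite huv.
have := allP (allP (allP HT _ (L6_full x.2)) _ (L6_full y.2)) _ (L6_full z.2).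
by rewrite (in_ _ _ e1 hxy) (in_ _ _ e2 hyz) (in_ _ _ e3 hzx).
Qed.

Lemma no_convert {T : finType} (e : rel T) (hc : cubic e) (C S : {set T}) :
  (forall v, v \in C -> 2 <= #|[set w in C | e v w]|) ->
  (forall v, v \in C -> v \notin S) ->
  forall t v, v \in C -> v \notin iter t (conv_step e) S.
Proof.
move=> hC hS; elim=> [|t IH] v vC /=; first exact: hS.
rewrite /conv_step in_setU (negPf (IH v vC)) /= inE -ltnNge.
set X := iter t _ S.
have sub : [set w in X | e v w] \subset nbhd e v :\: [set w in C | e v w].
  apply/subsetP => w; rewrite !inE => /andP[wX evw]; rewrite evw andbT /=.
  by rewrite andbT; apply: contraTN wX => wC; apply: IH.
have sub2 : [set w in C | e v w] \subset nbhd e v.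
  by apply/subsetP => w; rewrite !inE => /andP[].
have := subset_leq_card sub.
rewrite cardsD (setIidPr sub2).
have := hc v; rewrite /deg => ->.
have := hC v vC; lia.
Qed.

Lemma lift_count m E (X : {set 'I_m * 'I_6}) (P : pred 'I_6) i a :
  (forall b, P b -> (i, b) \in X) ->
  count (fun b => P b && Hadj E a b) L6 <= #|[set w in X | ring_graph m E (i, a) w]|.
Proof.
move=> hX; rewrite -card6.
have pinj : injective (pair i : 'I_6 -> 'I_m * 'I_6) by move=> ? ? [].
rewrite -(card_imset _ pinj); apply: subset_leq_card.
apply/subsetP => w /imsetP[b]; rewrite inE => /andP[pb hab] ->.
by rewrite inE hX //= ringE /= eqxx hab.
Qed.

Definition cyc_ok E (Cs : seq (seq nat)) :=
  all (fun C => (C != [::]) && all (fun k => k < 6) C &&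
     all (fun a : 'I_6 => ((a:nat) \in C) ==> (2 <= count (fun b : 'I_6 => ((b:nat) \in C) && Hadj E a b) L6)) L6) Cs
  && all (fun a : 'I_6 => has (fun C => (a:nat) \notin C) Cs) L6.

Definition cyc4 : seq (seq nat) := [:: [:: 0;1;5]; [:: 2;3;4]]%N.
Definition cyc2 : seq (seq nat) := [:: [:: 0;1;4;5]; [:: 1;2;3;4]; [:: 2;3;4;5]; [:: 0;1;2;5]]%N.
Lemma cyc_ok4 : cyc_ok H4_edges cyc4. Proof. by vm_compute. Qed.
Lemma cyc_ok2 : cyc_ok H2_edges cyc2. Proof. by vm_compute. Qed.

Lemma copy_lb m E Cs (hc : cubic (ring_graph m E)) (HCs : cyc_ok E Cs) S :
  conversion_set2 (ring_graph m E) S -> forall i, 2 <= #|[set j | (i, j) \in S]|.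
Proof.
move=> [t ht] i; rewrite leqNgt; apply/negP => h1.
have [a ha] : exists a : 'I_6, forall j, (i, j) \in S -> j = a.
  case: (pickP [pred j | (i, j) \in S]) => [a0 ha0 | hnone].
    exists a0 => j hj; apply: (card_le1_eqP h1); by rewrite inE.
  by exists (o6 0) => j hj; move: (hnone j); rewrite /= hj.
case/andP: HCs => /allP Hc /allP Hh.
have /hasP[C CCs aC] := Hh a (L6_full a).
case/andP: (Hc C CCs) => /andP[Cne Clt] /allP Ccore.
pose Cset := [set x : 'I_m * 'I_6 | (x.1 == i) && ((x.2:nat) \in C)].
have hC : forall v, v \in Cset -> 2 <= #|[set w in Cset | ring_graph m E v w]|.
  move=> [i' b]; rewrite inE /= => /andP[/eqP -> hb].
  apply: leq_trans (lift_count m E Cset (fun c : 'I_6 => (c:nat) \in C) i b _).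
    by have := Ccore b (L6_full b); rewrite hb.
  by move=> c hc'; rewrite inE /= eqxx hc'.
have hS : forall v, v \in Cset -> v \notin S.
  move=> [i' b]; rewrite inE /= => /andP[/eqP -> hb]; apply/negP => /ha hba.
  by move: aC; rewrite -hba hb.
have [k kC hk] : exists2 k, k \in C & k < 6.
  by case: (C) Cne Clt => [//|k C'] _ /andP[hk _]; exists k; rewrite ?inE ?eqxx.
have := @no_convert _ _ hc _ _ hC hS t (i, o6 k).
rewrite ht inE /= eqxx modn_small // kC inE => /(_ isT). by [].
Qed.

Lemma card_split m (S : {set 'I_m * 'I_6}) :
  #|S| = \sum_(i < m) #|[set j | (i, j) \in S]|.
Proof.
have -> : \sum_(i < m) #|[set j | (i, j) \in S]| =
          \sum_(i < m) \sum_(j < 6) (if (i, j) \in S then 1 else 0).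
  apply: eq_bigr => i _.
  by rewrite -sum1_card big_mkcond; apply: eq_bigr => j _; rewrite inE.
rewrite pair_bigA /= -sum1_card big_mkcond /=.
by apply: eq_bigr => [[i j]].
Qed.

Lemma lower_bound m E Cs (hc : cubic (ring_graph m E)) (HCs : cyc_ok E Cs) S :
  conversion_set2 (ring_graph m E) S -> 2 * m <= #|S|.
Proof.
move=> hS; rewrite card_split.
apply: (@leq_trans (\sum_(i < m) 2)).
  by rewrite sum_nat_const card_ord mulnC.
by apply: leq_sum => i _; apply: (@copy_lb _ _ _ hc HCs _ hS i).
Qed.

Definition Sb m (Bn : seq nat) : {set 'I_m * 'I_6} :=
  setX [set: 'I_m] [set b : 'I_6 | (b:nat) \in Bn].

Definition conv_ok E (Bn : seq nat) :=
  let B1 := fun b : 'I_6 => ((b:nat) \in Bn) ||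
             (2 <= count (fun c : 'I_6 => ((c:nat) \in Bn) && Hadj E b c) L6) in
  all (fun a : 'I_6 => B1 a || (2 <= count (fun c => B1 c && Hadj E a c) L6)) L6.

Lemma conv_ok4 : conv_ok H4_edges [:: 1; 4]%N. Proof. by vm_compute. Qed.
Lemma conv_ok2 : conv_ok H2_edges [:: 1; 5]%N. Proof. by vm_compute. Qed.

Lemma conv_in {T : finType} (e : rel T) (X : {set T}) (v : T) :
  (v \in X) || (2 <= #|[set w in X | e v w]|) -> v \in conv_step e X.
Proof. by rewrite /conv_step in_setU inE. Qed.

Lemma upper_conv m E Bn (H : conv_ok E Bn) : conversion_set2 (ring_graph m E) (Sb m Bn).
Proof.
exists 2; apply/setP => [[i a]]; rewrite in_setT /=.
set S := Sb m Bn.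
have h1 : forall b : 'I_6, ((b:nat) \in Bn) ||
             (2 <= count (fun c : 'I_6 => ((c:nat) \in Bn) && Hadj E b c) L6) ->
          (i, b) \in conv_step (ring_graph m E) S.
  move=> b /orP[hb|hc]; apply: conv_in.
    by rewrite /S /Sb in_setX in_setT inE hb.
  apply/orP; right; apply: leq_trans hc _.
  apply: lift_count => c hc'.
  by rewrite /S /Sb in_setX in_setT inE hc'.
have := allP H a (L6_full a) => /orP[hB|hc]; apply: conv_in.
  by rewrite h1.
apply/orP; right; apply: leq_trans hc _.
exact: lift_count.
Qed.

Lemma card_Sb m Bn : #|Sb m Bn| = m * count (fun b : 'I_6 => (b:nat) \in Bn) L6.
Proof. by rewrite /Sb cardsX cardsT card_ord card6s. Qed.

Lemma c2_ring m E Cs Bn (hc : cubic (ring_graph m E)) (HCs : cyc_ok E Cs) (H : conv_ok E Bn)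
  (HB : count (fun b : 'I_6 => (b:nat) \in Bn) L6 = 2) :
  is_c2 (ring_graph m E) (2 * m).
Proof.
split.
  by exists (Sb m Bn); split; [exact: upper_conv | rewrite card_Sb HB mulnC].
by move=> S hS; exact: (@lower_bound _ _ _ hc HCs S hS).
Qed.

Lemma arith m (hm : 3 <= m) :
  ((2 * m)%:Z - ((#|{: 'I_m * 'I_6}| + 2 + 3) %/ 4)%:Z = ((m - 1) %/ 2)%:Z)%R.
Proof.
rewrite card_prod !card_ord.
apply/eqP; rewrite GRing.subr_eq -PoszD; apply/eqP; congr Posz.
lia.
Qed.

Lemma irr_of E : all (fun a => ~~ Hadj E a a) L6 -> forall a, Hadj E a a = false.
Proof. by move=> h a; apply/negbTE; apply: (forall6 (fun a => ~~ Hadj E a a) h). Qed.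

Lemma deg_of E : all (fun a : 'I_6 => count (Hadj E a) L6 + (((a:nat) == 0) || ((a:nat) == 3)) == 3) L6 ->
  forall a : 'I_6, count (Hadj E a) L6 + (((a:nat) == 0) || ((a:nat) == 3)) = 3.
Proof. by move=> h a; apply/eqP; move: a; apply: forall6. Qed.

Theorem proposition5p8 (m : nat) (hm : 3 <= m) :
  (simple_graph (G1 m) /\ cubic (G1 m) /\ bridgeless (G1 m) /\
   class1 (G1 m) /\ has_triangle (G1 m)) /\
  (simple_graph (G2 m) /\ cubic (G2 m) /\ bridgeless (G2 m) /\
   class1 (G2 m) /\ ~ has_triangle (G2 m)) /\
  (exists k, is_c2 (G1 m) k /\
     (k%:Z - ((#|{: 'I_m * 'I_6}| + 2 + 3) %/ 4)%:Z = ((m - 1) %/ 2)%:Z)%R) /\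
  (exists k, is_c2 (G2 m) k /\
     (k%:Z - ((#|{: 'I_m * 'I_6}| + 2 + 3) %/ 4)%:Z = ((m - 1) %/ 2)%:Z)%R).
Proof.
have hm1 : 1 < m by lia.
have hm0 : 0 < m by lia.
have irr4 : forall a, Hadj H4_edges a a = false by apply: irr_of; vm_compute.
have irr2 : forall a, Hadj H2_edges a a = false by apply: irr_of; vm_compute.
have deg4 := deg_of H4_edges ltac:(by vm_compute).
have deg2 := deg_of H2_edges ltac:(by vm_compute).
have cub4 : cubic (G1 m) by apply: cubic_ring.
have cub2 : cubic (G2 m) by apply: cubic_ring.
split; [|split; [|split]].
- split; first exact: simple_ring.
  split; first exact: cub4.
  split; first by exact: (@bridgeless_ring m H4_edges tab4 hm1 irr4 tab4_ok (erefl true) (erefl true) (erefl true)).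
  split; first by apply: class1_ring => //; exact: col_ok4.
  exists (Ordinal hm0, o6 0), (Ordinal hm0, o6 1), (Ordinal hm0, o6 5).
  by rewrite /G1 !ringE /= ?eqxx.
- split; first exact: simple_ring.
  split; first exact: cub2.
  split; first by exact: (@bridgeless_ring m H2_edges tab2 hm1 irr2 tab2_ok (erefl true) (erefl true) (erefl true)).
  split; first by apply: class1_ring => //; exact: col_ok2.
  by apply: tri_free => //; vm_compute.
- exists (2 * m); split; last exact: arith.
  exact: (@c2_ring m H4_edges cyc4 [:: 1; 4]%N cub4 cyc_ok4 conv_ok4 (erefl 2)).
- exists (2 * m); split; last exact: arith.
  exact: (@c2_ring m H2_edges cyc2 [:: 1; 5]%N cub2 cyc_ok2 conv_ok2 (erefl 2)).
Qed.
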